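(* Let $G$ be an unmixed chordal graph and let $x$ be a simplicial vertex of $G$. Then $G\setminus\{y\}$ is unmixed for every $y\in N_G(x)$.
   Context: A graph is chordal if every cycle of length at least four has a chord; a vertex is simplicial if its neighbors form a clique. $N_G(x)$ is the set of neighbors of $x$, and $G\setminus\{y\}$ is the induced subgraph on $V(G)\setminus\{y\}$. A graph is unmixed if all its maximal independent sets have the same cardinality. *)

(* Defs.v *)
From mathcomp Require Import all_boot.
Set Implicit Arguments. Unset Strict Implicit. Unset Printing Implicit Defensive.

(* A finite simple graph: vertex type T (finType), edge relation e,
   symmetric and irreflexive.  Graph notions are stated relative to a
   vertex set V : {set T}, meaning the induced subgraph G[V]. *)

Definition simple_graph (T : finType) (e : rel T) :=
  symmetric e /\ irreflexive e.

Definition independent (T : finType) (e : rel T) (V S : {set T}) :=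
  S \subset V /\ (forall u v, u \in S -> v \in S -> ~~ e u v).

Definition maximal_independent (T : finType) (e : rel T) (V S : {set T}) :=
  independent e V S /\
  (forall S' : {set T}, independent e V S' -> S \subset S' -> S' = S).

Definition unmixed (T : finType) (e : rel T) (V : {set T}) :=
  forall S1 S2 : {set T}, maximal_independent e V S1 ->
    maximal_independent e V S2 -> #|S1| = #|S2|.

(* The whole graph is chordal: every cycle of length at least four
   (given by a duplicate-free nonempty sequence of vertices c = x :: s whose
   consecutive vertices, cyclically, are adjacent) has a chord, i.e. an edge
   between two vertices of the cycle that are not consecutive on it
   (indices i < j with j <> i+1 and (i,j) <> (0, size c - 1)). *)
Definition chordal (T : finType) (e : rel T) :=
  forall (x : T) (s : seq T), let c := x :: s in
    4 <= size c -> uniq c -> cycle e c ->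
    exists i j, [/\ i < j, j < size c, j != i.+1,
                    ~~ ((i == 0) && (j == (size c).-1))
                  & e (nth x c i) (nth x c j)].

Definition simplicial (T : finType) (e : rel T) (x : T) :=
  forall u v, e x u -> e x v -> u != v -> e u v.

(* Main.v *)
Require Import Defs.
From mathcomp Require Import all_boot.

Lemma mi_dom (T : finType) (e : rel T) (V S : {set T}) v :
  simple_graph e -> maximal_independent e V S -> v \in V -> v \notin S ->
  exists u, u \in S /\ e v u.
Proof.
move=> [sym irr] [[sSV indS] maxS] vV vS.
case: (boolP [exists u in S, e v u]) => [/exists_inP [u uS evu]|H].
  by exists u.
have indS' : independent e V (v |: S).
  split; first by rewrite subUset sub1set vV.
  move=> a b; rewrite !in_setU1 => /orP [/eqP->|aS] /orP [/eqP->|bS].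
  - by rewrite irr.
  - by apply/negP => evb; move/exists_inP: H; apply; exists b.
  - by rewrite sym; apply/negP => evb; move/exists_inP: H; apply; exists a.
  - exact: indS.
have := maxS _ indS' (subsetUr _ _) => E.
by move: vS; rewrite -E in_setU1 eqxx.
Qed.

Lemma dom_mi (T : finType) (e : rel T) (V S : {set T}) :
  independent e V S ->
  (forall v, v \in V -> v \notin S -> exists u, u \in S /\ e v u) ->
  maximal_independent e V S.
Proof.
move=> [sSV indS] D; split; first by [].
move=> S' [sS'V indS'] sub; apply/eqP; rewrite eqEsubset; apply/andP; split => //.
apply/subsetP => v vS'; apply/negPn/negP => vS.
have [u [uS evu]] := D v (subsetP sS'V v vS') vS.
by have := indS' v u vS' (subsetP sub u uS); rewrite evu.
Qed.

Theorem proposition3p4 (T : finType) (e : rel T) (x : T) :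
  simple_graph e -> chordal e -> unmixed e [set: T] -> simplicial e x ->
  forall y : T, e x y -> unmixed e ([set: T] :\ y).
Proof.
move=> sg _ un simp y exy.
have lift : forall S, maximal_independent e ([set: T] :\ y) S ->
    maximal_independent e [set: T] S.
  move=> S mS; apply: dom_mi.
    by split; [apply: subsetT | case: mS => [[_ ?] _]].
  move=> v _ vS; case: (eqVneq v y) => [->|vy].
    have xy : x != y by apply/eqP => E; move: exy; rewrite E (proj2 sg).
    have xV : x \in [set: T] :\ y by rewrite in_setD1 xy in_setT.
    case: (boolP (x \in S)) => xS.
      by exists x; split => //; rewrite (proj1 sg).
    have [z [zS exz]] := @mi_dom _ _ _ _ _ sg mS xV xS.
    exists z; split => //; apply: simp => //.
    have := subsetP (proj1 (proj1 mS)) z zS; rewrite in_setD1 => /andP [zy _].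
    by rewrite eq_sym.
  by apply: @mi_dom _ _ _ _ _ sg mS _ vS; rewrite in_setD1 vy in_setT.
move=> S1 S2 m1 m2; exact: un (lift _ m1) (lift _ m2).
Qed.
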